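(* Let $q$ be a prime power, $s\ge 2$ an integer, $v=2s$, and let $V$ be a $v$-dimensional vector space over $\mathrm{GF}(q)$. Let $\mathcal{G}$ be a Desarguesian $1$-spread of $V$. Let $L$ be a $2$-dimensional subspace of $V$ not contained in any element of $\mathcal{G}$. Then the number of $4$-dimensional subspaces of $V$ containing $L$ that are scattered with respect to $\mathcal{G}$ equals \[ \lambda_{\max}=\begin{bmatrix} v-2\\ 2\end{bmatrix}_q-1-q\begin{bmatrix} 2\\ 1\end{bmatrix}_q\begin{bmatrix} v-4\\ 1\end{bmatrix}_q-\begin{bmatrix} v\\ 1\end{bmatrix}_q\Big/\begin{bmatrix} 2\\ 1\end{bmatrix}_q+\begin{bmatrix} 4\\ 1\end{bmatrix}_q\Big/\begin{bmatrix} 2\\ 1\end{bmatrix}_q . \]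
   Context: For integers $0\le m\le n$, $\begin{bmatrix} n\\ m\end{bmatrix}_q=\prod_{i=0}^{m-1}\frac{q^{n-i}-1}{q^{m-i}-1}$ is the Gaussian coefficient. A $1$-spread of $V$ is a set of $2$-dimensional subspaces of $V$ such that every $1$-dimensional subspace of $V$ lies in exactly one of them. The Desarguesian $1$-spread of $\mathrm{GF}(q^2)^s$, viewed as a $2s$-dimensional $\mathrm{GF}(q)$-vector space, is the set of all $1$-dimensional $\mathrm{GF}(q^2)$-subspaces of $\mathrm{GF}(q^2)^s$ (each being a $2$-dimensional $\mathrm{GF}(q)$-subspace); a $1$-spread of $V$ is Desarguesian if it is the image of this spread under some $\mathrm{GF}(q)$-linear isomorphism $\mathrm{GF}(q^2)^s\to V$. A subspace $B\le V$ is scattered with respect to $\mathcal{G}$ if $B$ contains no $2$-dimensional subspace contained in an element of $\mathcal{G}$ (equivalently, $\dim(B\cap S)\le 1$ for all $S\in\mathcal{G}$). *)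

(* Defs.v *)
From HB Require Import structures.
From mathcomp Require Import all_boot all_order all_algebra all_field.
Set Implicit Arguments. Unset Strict Implicit. Unset Printing Implicit Defensive.
Import GRing.Theory.
Local Open Scope ring_scope.

Import VectorInternalTheory.
HB.instance Definition _ (F : finFieldType) (vT : vectType F) :=
  [Countable of {vspace vT} by <:].
HB.instance Definition _ (F : finFieldType) (vT : vectType F) :=
  [Finite of {vspace vT} by <:].

Definition gauss (q n m : nat) : rat :=
  \prod_(i < m) (((q ^ (n - i))%:R - 1) / ((q ^ (m - i))%:R - 1)).

Definition is_spread1 (F : fieldType) (vT : vectType F) (G : pred {vspace vT}) :=
  (forall S, G S -> \dim S = 2%N) /\
  (forall P : {vspace vT}, \dim P = 1%N ->
     exists S, [/\ G S, (P <= S)%VS & forall S', G S' -> (P <= S')%VS -> S' = S]).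

(* F-linear isomorphisms GF(q^2)^s -> V, where K is the quadratic extension of F
   and F acts on 'rV[K]_s through the embedding a |-> a%:A *)
Definition Flin_iso (F : fieldType) (K : fieldExtType F) (s : nat) (vT : vectType F)
    (f : 'rV[K]_s -> vT) :=
  (forall (a : F) (x y : 'rV[K]_s), f ((a%:A : K) *: x + y) = a *: f x + f y)
  /\ bijective f.

(* The Desarguesian 1-spread: image under some F-linear isomorphism of the set of
   1-dim K-subspaces of K^s *)
Definition desarguesian (F : fieldType) (K : fieldExtType F) (s : nat) (vT : vectType F)
    (G : pred {vspace vT}) :=
  exists f : 'rV[K]_s -> vT, Flin_iso f /\
    forall S : {vspace vT},
      G S <-> exists2 x : 'rV[K]_s, x != 0 &
                forall w : vT, w \in S <-> exists c : K, w = f (c *: x).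

Definition scattered (F : finFieldType) (vT : vectType F) (G : pred {vspace vT})
    (B : {vspace vT}) : bool :=
  [forall S : {vspace vT}, G S ==> (\dim (B :&: S) <= 1)%N].

(* Main.v *)
Require Import Defs.
From HB Require Import structures.
From mathcomp Require Import all_boot all_order all_algebra all_field.
From mathcomp Require Import zify ring lra.
Import GRing.Theory.
Local Open Scope ring_scope.

Lemma dc2 (A B : finType) (P : pred A) (Q : pred B) (R : A -> B -> bool) :
  (\sum_(a | P a) #|[pred b | Q b && R a b]| = \sum_(b | Q b) #|[pred a | P a && R a b]|)%N.
Proof.
have E (C D : finType) (P' : pred C) (Q' : pred D) (R' : C -> D -> bool) :
  (\sum_(c | P' c) #|[pred d | Q' d && R' c d]| = \sum_(c | P' c) \sum_(d | Q' d) (R' c d : nat))%N.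
  apply: eq_bigr => c _; rewrite -sum1_card big_mkcondr /=.
  by apply: eq_bigr => d _; case: (R' c d).
rewrite E (E _ _ _ _ (fun b a => R a b)); exact: exchange_big.
Qed.

Lemma aux1 n : (n.+1 * n.+1 - 1 = n.+2 * n)%N.
Proof. rewrite subn1 -[RHS]/((n.+2 * n).+1).-1; congr _.-1; rewrite !mulSn !mulnS; lia. Qed.
Lemma aux2 (n : nat) : (0 < n)%N -> (n * n - 1 = n.+1 * (n - 1))%N.
Proof. by case: n => // n _; rewrite aux1 subn1. Qed.

Lemma aux3 (q : nat) : (0 < q)%N -> (q ^ 4 - q ^ 2 = q.+1 * (q ^ 3 - q ^ 2))%N.
Proof.
move=> q0.
rewrite (_ : q ^ 4 = q ^ 2 * (q * q))%N; last by rewrite mulnn -expnD.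
rewrite (_ : q ^ 3 = q ^ 2 * q)%N; last by rewrite -expnSr.
move: (q ^ 2)%N => a.
have e1 : (a * (q * q) - a = a * (q * q - 1))%N by rewrite mulnBr muln1.
have e2 : (a * q - a = a * (q - 1))%N by rewrite mulnBr muln1.
by rewrite e1 e2 aux2 // mulnCA.
Qed.

Lemma subaux m : [/\ (m + 4 - 2 = m + 2)%N, (m + 4 - 2 - 1 = m + 1)%N & (m + 4 - 4 = m)%N].
Proof. split; lia. Qed.

Lemma sum_bool (A : finType) (P Q : pred A) :
  (\sum_(a | P a) (Q a : nat) = #|[pred a | P a && Q a]|)%N.
Proof.
rewrite -sum1_card big_mkcondr /=.
by apply: eq_bigr => a _; case: (Q a).
Qed.

Section S.
Variables (F : finFieldType) (vT : vectType F).
Local Notation fvT := (finvect_type vT).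
Local Notation q := #|F|.

Lemma cardU (V : {vspace vT}) : #|[pred x : fvT | (x : vT) \in V]| = (q ^ \dim V)%N.
Proof.
set n := \dim V; pose V2rV (v : vT) := \row_i coord (vbasis V) i v.
pose rV2V (rv : 'rV_n) : fvT := \sum_i rv 0 i *: (vbasis V)`_i.
have rV2V_K: cancel rV2V V2rV.
  have freeV: free (vbasis V) := basis_free (vbasisP V).
  by move=> rv; apply/rowP=> i; rewrite mxE coord_sum_free.
rewrite -[n]mul1n -card_mx -(card_imset _ (can_inj rV2V_K)).
apply: eq_card => v; apply/idP/imsetP=> [/coord_vbasis-> | [rv _ ->]].
  by exists (V2rV v) => //; apply: eq_bigr => i _; rewrite mxE.
by apply: (@rpred_sum vT) => i _; rewrite rpredZ ?vbasis_mem ?memt_nth.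
Qed.

Lemma cardU0 (V : {vspace vT}) :
  #|[pred x : fvT | ((x : vT) \in V) && ((x : vT) != 0)]| = (q ^ \dim V - 1)%N.
Proof.
rewrite -cardU [in RHS](cardD1 (0 : fvT)) inE (mem0v V) add1n subn1 /=.
by apply: eq_card => x; rewrite !inE andbC.
Qed.

Lemma cardUW (W V : {vspace vT}) : (W <= V)%VS ->
  #|[pred x : fvT | ((x : vT) \in V) && ((x : vT) \notin W)]| = (q ^ \dim V - q ^ \dim W)%N.
Proof.
move=> sWV; rewrite -!cardU -(cardID [pred x : fvT | (x : vT) \in W] [pred x : fvT | (x : vT) \in V]).
have -> : #|[predI [pred x : fvT | (x : vT) \in V] & [pred x : fvT | (x : vT) \in W]]| = #|[pred x : fvT | (x : vT) \in W]|.
  by apply: eq_card => x; rewrite !inE; case xW: (_ \in W); rewrite ?andbT ?andbF // (subvP sWV).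
by rewrite addKn; apply: eq_card => x; rewrite !inE andbC.
Qed.


Lemma sub_eq_dim (U V : {vspace vT}) : (U <= V)%VS -> (\dim V <= \dim U)%N -> U = V.
Proof. by move=> sUV dVU; apply/eqP; rewrite eqEdim sUV. Qed.

Lemma dim_addline (W : {vspace vT}) (x : vT) : x \notin W ->
  \dim (W + <[x]>)%VS = (\dim W).+1.
Proof.
move=> xW.
have x0 : x != 0 by apply: contraNneq xW => ->; rewrite mem0v.
have c0 : \dim (W :&: <[x]>)%VS = 0%N.
  apply/eqP; rewrite dimv_eq0 -subv0; apply/subvP => y /memv_capP [yW /vlineP [k yk]].
  rewrite yk in yW *; rewrite memv0 scaler_eq0; apply/orP; left; apply/eqP.
  apply: contraNeq xW => k0; by rewrite -[x](scalerK k0) memvZ.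
have := dimv_sum_cap W <[x]>; rewrite c0 addn0 dim_vline x0 addn1 //.
Qed.

Lemma sum_const_pred (T : finType) (P : pred T) (k : nat) :
  (\sum_(i | P i) k = #|P| * k)%N.
Proof. by rewrite sum_nat_const. Qed.

Lemma hyper (W A : {vspace vT}) : (W <= A)%VS ->
  (#|[pred U : {vspace vT} | [&& (W <= U)%VS, (U <= A)%VS & \dim U == (\dim W).+1]]|
     * (q ^ (\dim W).+1 - q ^ \dim W) = q ^ \dim A - q ^ \dim W)%N.
Proof.
move=> sWA.
set P := [pred U : {vspace vT} | _].
rewrite -sum_const_pred.
transitivity (\sum_(U | P U) #|[pred x : fvT | xpredT x &&
                 (((x : vT) \in U) && ((x : vT) \notin W))]|)%N.
  apply: eq_bigr => U /and3P [sWU sUA /eqP dU].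
  by rewrite -dU -cardUW //; apply: eq_card => x; rewrite !inE.
rewrite dc2 -cardUW //.
rewrite -[RHS]sum1_card [RHS]big_mkcond /=; apply: eq_bigr => x _; rewrite inE.
case: ifP => [/andP [xA xW] | xAW].
  apply: (@eq_card1 _ (W + <[x : vT]>)%VS) => U; rewrite !inE.
  apply/idP/eqP => [/andP [/and3P [sWU sUA /eqP dU] /andP [xU _]] | ->].
    apply/esym/sub_eq_dim; first by rewrite subv_add sWU -memvE.
    by rewrite dU dim_addline.
  rewrite addvSl subv_add sWA -memvE xA dim_addline // eqxx xW andbT /=.
  rewrite andbT; exact: (subvP (addvSr W <[x : vT]>) _ (memv_line (x : vT))).
apply: anti_leq; rewrite leq0n andbT; rewrite leqNgt; apply/negP => /card_gt0P [U]; rewrite !inE.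
move=> /and3P [/and3P [_ sUA _] xU xW].
by move: xAW; rewrite (subvP sUA _ xU) xW.
Qed.


Section Spread.
Variable G : pred {vspace vT}.
Hypothesis hG : is_spread1 G.

Lemma spread_one (x : vT) : x != 0 ->
  #|[pred S : {vspace vT} | G S && (x \in S)]| = 1%N.
Proof.
move=> x0; have [_ H] := hG.
have d1 : \dim <[x]> = 1%N by rewrite dim_vline x0.
have [S [GS sxS uS]] := H <[x]>%VS d1.
apply: (@eq_card1 _ S) => S'; rewrite !inE.
apply/andP/eqP => [[GS' xS'] | ->]; first exact: uS.
by [].
Qed.

Lemma spread_sum (A : {vspace vT}) :
  (\sum_(S | G S) (q ^ \dim (S :&: A) - 1) = q ^ \dim A - 1)%N.
Proof.
transitivity (\sum_(S | G S) #|[pred x : fvT | xpredT x &&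
                 (((x : vT) \in (S :&: A)%VS) && ((x : vT) != 0%R))]|)%N.
  by apply: eq_bigr => S _; rewrite -cardU0; apply: eq_card => x; rewrite !inE.
rewrite dc2 -cardU0.
rewrite -[RHS]sum1_card [RHS]big_mkcond /=; apply: eq_bigr => x _; rewrite inE.
case: ifP => [/andP [xA x0] | xAW].
  rewrite -(@spread_one x x0); apply: eq_card => S; rewrite !inE memv_cap xA x0.
  by rewrite !andbT.
apply/eqP; rewrite -leqn0 leqNgt; apply/negP => /card_gt0P [S]; rewrite !inE.
move=> /and3P [_]; rewrite memv_cap => /andP [_ xA] x0; by rewrite xA x0 in xAW.
Qed.

End Spread.


Lemma desarg_closed (K : fieldExtType F) (s : nat) (G : pred {vspace vT}) :
  desarguesian K s G -> forall (S1 S2 S : {vspace vT}) (w : vT),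
  G S1 -> G S2 -> G S -> w \in S -> w \in (S1 + S2)%VS -> w != 0 ->
  (S <= S1 + S2)%VS.
Proof.
case=> f [[fl [g fgK gfK]] HG] S1 S2 S w G1 G2 GS wS wM w0.
have fD x y : f (x + y) = f x + f y.
  by have := fl 1 x y; rewrite !scale1r.
have f0 : f 0 = 0.
  by have := fD 0 0; rewrite addr0 -{1}[f 0]addr0 => /addrI <-.
have finj : injective f := can_inj fgK.
have [x1 _ H1] := (HG S1).1 G1.
have [x2 _ H2] := (HG S2).1 G2.
have [z _ H] := (HG S).1 GS.
have [u uS1 [u' uS2 wE]] := memv_addP wM.
have [a ua] := (H1 u).1 uS1.
have [b ub] := (H2 u').1 uS2.
have [c wc] := (H w).1 wS.
have ec : c *: z = a *: x1 + b *: x2 by apply: finj; rewrite fD -ua -ub -wc.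
have c0 : c != 0 by apply: contra_neq w0 => c0; rewrite wc c0 scale0r f0.
apply/subvP => y yS; have [d ->] := (H y).1 yS.
have -> : d *: z = (d / c * a) *: x1 + (d / c * b) *: x2.
  by rewrite -(scalerA (d / c) a) -(scalerA (d / c) b) -scalerDr -ec scalerA divfK.
rewrite fD; apply: memv_add; [apply/(H1 _).2 | apply/(H2 _).2]; by eexists.
Qed.

End S.

Theorem lemma4 (F : finFieldType) (K : fieldExtType F) (s : nat)
  (vT : vectType F) (G : pred {vspace vT}) (L : {vspace vT}) :
  (\dim {:K} = 2)%N ->
  (2 <= s)%N ->
  (\dim {:vT} = 2 * s)%N ->
  is_spread1 G ->
  desarguesian K s G ->
  \dim L = 2%N ->
  (forall S, G S -> ~ (L <= S)%VS) ->
  let q := #|F| in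
  let v := (2 * s)%N in
  (#|[set U : {vspace vT} | [&& (L <= U)%VS, \dim U == 4%N
                              & scattered G U ] ]|%:R : rat)
  = gauss q (v - 2) 2 - 1 - q%:R * gauss q 2 1 * gauss q (v - 4) 1
    - gauss q v 1 / gauss q 2 1 + gauss q 4 1 / gauss q 2 1.
Proof.
move=> dK hs dV hG hD dL hL q v.
have d2 S : G S -> \dim S = 2%N := hG.1 S.
have hq : (1 < q)%N.
  rewrite /q (cardD1 (0 : F)) (cardD1 (1 : F)) !inE oner_neq0 /=.
  by rewrite add1n ltnS add1n.
have qpos : (0 < q)%N by apply: ltnW.
pose cntS (U : {vspace vT}) := #|[pred S : {vspace vT} | G S && (S <= U)%VS]|.
have scatE U : scattered G U = (cntS U == 0%N).
  rewrite /scattered; apply/forallP/eqP => [H | H S].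
    apply/eqP; rewrite -leqn0 leqNgt; apply/negP => /card_gt0P [S].
    rewrite inE => /andP [GS sSU]; have := H S; rewrite GS /=.
    by rewrite (capv_idPr sSU) d2.
  apply/implyP => GS; rewrite leqNgt; apply/negP => lt1.
  have sSU : (S <= U)%VS.
    apply/capv_idPr/sub_eq_dim; first exact: capvSr.
    by rewrite d2.
  by have := card0_eq H S; rewrite !inE GS sSU.
have Fsum := @spread_sum _ _ G hG.
have dSL S : G S -> (S :&: L != 0)%VS -> \dim (S :&: L) = 1%N.
  move=> GS nz.
  have : (\dim (S :&: L) <= 2)%N by rewrite -dL dimvS // capvSr.
  have : (\dim (S :&: L) != 0)%N by rewrite dimv_eq0.
  have : (\dim (S :&: L) != 2)%N.
    apply/negP => /eqP d; apply: (hL S GS); apply/capv_idPr/sub_eq_dim.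
      exact: capvSr.
    by rewrite d dL.
  lia.
pose G1 := [pred S : {vspace vT} | G S && (S :&: L != 0)%VS].
pose G0 := [pred S : {vspace vT} | G S && (S :&: L == 0)%VS].
have E1 : (#|G| * (q ^ 2 - 1) = q ^ v - 1)%N.
  rewrite -sum_const_pred /v -dV -Fsum; apply: eq_bigr => S GS.
  by rewrite capvf d2.
have E2 : (#|G1| * (q - 1) = q ^ 2 - 1)%N.
  rewrite -sum_const_pred -dL -Fsum [RHS](bigID (fun S => S :&: L == 0)%VS) /=.
  rewrite [X in (_ = X + _)%N]big1 => [|S /andP [GS /eqP ->]]; last by rewrite dimv0 expn0 subnn.
  by rewrite add0n; apply: eq_bigr => S /andP [GS nz]; rewrite dSL.
have E4 : (#|G0| + #|G1| = #|G|)%N.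
  rewrite -(cardID [pred S : {vspace vT} | S :&: L == 0]%VS G).
  by congr (_ + _)%N; apply: eq_card => S; rewrite !inE // andbC.
have q43 : (0 < q ^ 4 - q ^ 3)%N by rewrite subn_gt0 ltn_exp2l.
pose h := ((q ^ v - q ^ 3) %/ (q ^ 4 - q ^ 3))%N.
have hyp3' W : \dim W = 3%N ->
    (#|[pred U : {vspace vT} | (W <= U)%VS && (\dim U == 4%N)]| * (q ^ 4 - q ^ 3) = q ^ v - q ^ 3)%N.
  move=> dW; have := @hyper _ _ W fullv (subvf W); rewrite dW /v -dV => <-.
  by congr (_ * _)%N; apply: eq_card => U; rewrite !inE subvf.
have hyp3 W : \dim W = 3%N -> #|[pred U : {vspace vT} | (W <= U)%VS && (\dim U == 4%N)]| = h.
  by move=> dW; rewrite /h -(hyp3' W dW) mulnK.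
have G1c : #|G1| = q.+1.
  apply/eqP; rewrite -(eqn_pmul2r (_ : 0 < q - 1)%N) ?subn_gt0 // E2 -mulnn aux2 //.
have [S1 [S2 [h1 h2 n12]]] : exists S1 S2, [/\ S1 \in G1, S2 \in G1 & S1 != S2].
  by apply/card_gt1P; rewrite G1c ltnS.
rewrite !inE in h1 h2; case/andP: h1 => GS1 nz1; case/andP: h2 => GS2 nz2.
have disj S S' : G S -> G S' -> S != S' -> (S :&: S' = 0)%VS.
  move=> GS GS' nSS'; apply/eqP; rewrite -vpick0; apply: contraR nSS' => nz.
  have /memv_capP [xS xS'] := memv_pick (S :&: S').
  have [_ H] := hG.
  have d1 : \dim <[vpick (S :&: S')]> = 1%N by rewrite dim_vline nz.
  have [S0 [_ _ u]] := H _ d1.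
  rewrite memvE in xS xS'.
  by rewrite (u S GS xS) (u S' GS' xS').
pose M := (S1 + S2)%VS.
have dM : \dim M = 4%N.
  by have := dimv_sum_cap S1 S2; rewrite disj // dimv0 addn0 (d2 S1 GS1) (d2 S2 GS2).
pose x1 := vpick (S1 :&: L); pose x2 := vpick (S2 :&: L).
have /memv_capP [x1S1 x1L] : x1 \in (S1 :&: L)%VS := memv_pick _.
have /memv_capP [x2S2 x2L] : x2 \in (S2 :&: L)%VS := memv_pick _.
have x1nz : x1 != 0 by rewrite /x1 vpick0.
have x2nz : x2 != 0 by rewrite /x2 vpick0.
have LM : (L <= M)%VS.
  pose N2 := (<[x1]> + <[x2]>)%VS.
  have sN2L : (N2 <= L)%VS by rewrite subv_add -!memvE x1L x2L.
  have c0 : (<[x1]> :&: <[x2]> = 0)%VS.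
    apply/eqP; rewrite -subv0 -(disj S1 S2) //; apply: capvS; rewrite -memvE //.
  have dN2 : \dim N2 = 2%N.
    by have := dimv_sum_cap <[x1]> <[x2]>; rewrite c0 dimv0 addn0 !dim_vline x1nz x2nz.
  have eL : N2 = L by apply: (@sub_eq_dim _ _ N2 L sN2L); rewrite dN2 dL.
  rewrite -eL /N2; apply: addvS; rewrite -memvE; [exact: x1S1 | exact: x2S2].
have closedM S : G S -> (S :&: M != 0)%VS -> (S <= M)%VS.
  move=> GS nz; have /memv_capP [wS wM] := memv_pick (S :&: M).
  have w0 : vpick (S :&: M) != 0 by move: nz; rewrite -vpick0.
  exact: (@desarg_closed _ _ K s G hD S1 S2 S _ GS1 GS2 GS wS wM w0).
have q2 : (1 < q ^ 2)%N by rewrite -{1}(expn0 q) ltn_exp2l.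
have cntM : cntS M = (q ^ 2).+1.
  have E := Fsum M; rewrite dM in E.
  have E' : (\sum_(S | G S) (q ^ \dim (S :&: M) - 1)
             = \sum_(S | G S && (S <= M)%VS) (q ^ 2 - 1))%N.
    rewrite big_mkcondr /=; apply: eq_bigr => S GS.
    case: ifP => sSM; first by rewrite (capv_idPl sSM) (d2 S GS).
    have z : (S :&: M)%VS = 0%VS.
      by apply/eqP; apply: (contraFT (fun nz => closedM S GS nz) sSM).
    by rewrite z dimv0 expn0 subnn.
  rewrite E' sum_const_pred in E.
  apply/eqP; rewrite -(eqn_pmul2r (_ : 0 < q ^ 2 - 1)%N); last by rewrite subn_gt0.
  rewrite /cntS E (_ : q ^ 4 = q ^ 2 * q ^ 2)%N; last by rewrite -expnD.
  by rewrite aux2 // ltnW.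
have cntU U : (L <= U)%VS -> \dim U = 4%N ->
    cntS U = ((~~ scattered G U) + (U == M) * q ^ 2)%N.
  move=> LU dU; rewrite scatE.
  have [eUM|nUM] := eqVneq U M.
    by rewrite eUM cntM mul1n add1n.
  rewrite mul0n addn0.
  case: (posnP (cntS U)) => [-> | pos]; first by [].
  have [S0] := card_gt0P pos; rewrite inE => /andP [GS0 sS0U].
  apply: (@eq_card1 _ S0) => S; rewrite !inE.
  apply/andP/eqP => [[GS sSU] | ->]; last by split.
  case: (eqVneq S S0) => [-> | nS]; first by [].
  exfalso; apply: (negP nUM).
  have dU' : \dim (S + S0)%VS = 4%N.
    by have := dimv_sum_cap S S0; rewrite disj // dimv0 addn0 (d2 S GS) (d2 S0 GS0).
  have eU : (S + S0)%VS = U.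
    apply: (@sub_eq_dim _ _ _ _ _); first by rewrite subv_add sSU sS0U.
    by rewrite dU dU'.
  have c1 : (S1 <= S + S0)%VS.
    apply: (@desarg_closed _ _ K s G hD S S0 S1 x1 GS GS0 GS1 x1S1 _ x1nz).
    by rewrite eU; apply: (subvP LU).
  have c2 : (S2 <= S + S0)%VS.
    apply: (@desarg_closed _ _ K s G hD S S0 S2 x2 GS GS0 GS2 x2S2 _ x2nz).
    by rewrite eU; apply: (subvP LU).
  have eMU : M = U.
    apply: (@sub_eq_dim _ _ _ _ _); first by rewrite -eU subv_add c1 c2.
    by rewrite dU dM.
  by rewrite eMU.
pose T := [pred U : {vspace vT} | (L <= U)%VS && (\dim U == 4%N)].
pose NS := [pred U : {vspace vT} | T U && ~~ scattered G U].
have MT : T M by rewrite inE LM dM eqxx.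
have P1 := @dc2 _ _ T G (fun U S => (S <= U)%VS).
have P3 : (\sum_(U | T U) #|[pred S | G S && (S <= U)%VS]| = #|NS| + q ^ 2)%N.
  rewrite (eq_bigr (fun U => ((~~ scattered G U) + (U == M) * q ^ 2)%N)); last first.
    by move=> U /andP [LU /eqP dU]; rewrite -cntU.
  rewrite big_split /=; congr (_ + _)%N.
    by rewrite sum_bool.
  rewrite (bigD1 M) //= eqxx mul1n big1 ?addn0 // => U /andP [_ nUM].
  by rewrite (negbTE nUM).
have cS S : G S -> #|[pred U | T U && (S <= U)%VS]| = if (S :&: L == 0)%VS then 1%N else h.
  move=> GS.
  have eP : [pred U | T U && (S <= U)%VS] =i [pred U : {vspace vT} | (L + S <= U)%VS && (\dim U == 4%N)].
    by move=> U; rewrite !inE subv_add; case: (L <= U)%VS; case: (S <= U)%VS; case: (\dim U == 4%N).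
  rewrite (eq_card eP).
  have ds := dimv_sum_cap L S; rewrite capvC dL (d2 S GS) in ds.
  case: ifP => [/eqP z | nz].
    rewrite z dimv0 addn0 in ds.
    apply: (@eq_card1 _ (L + S)%VS) => U; rewrite !inE.
    apply/andP/eqP => [[sU /eqP dU] | ->]; last by rewrite subvv ds.
    by apply/esym; apply: (@sub_eq_dim _ _ _ _ sU); rewrite dU ds.
  rewrite dSL ?nz // in ds.
  by apply: hyp3; apply/eqP; rewrite -(eqn_add2r 1) ds.
pose H3 := [pred W : {vspace vT} | (L <= W)%VS && (\dim W == 3%N)].
have E7 : (#|H3| * (q ^ 3 - q ^ 2) = q ^ v - q ^ 2)%N.
  have := @hyper _ _ L fullv (subvf L); rewrite dL /v -dV => <-.
  by congr (_ * _)%N; apply: eq_card => W; rewrite !inE subvf.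
have q32 : (0 < q ^ 3 - q ^ 2)%N by rewrite subn_gt0 ltn_exp2l.
have E8 : (#|H3| * h = #|T| * q.+1)%N.
  have D := @dc2 _ _ H3 T (fun W U => (W <= U)%VS).
  rewrite -!sum_const_pred.
  rewrite (eq_bigr (fun W => #|[pred U | T U && (W <= U)%VS]|)); last first.
    move=> W /andP [LW /eqP dW]; rewrite -(hyp3 W dW); apply: eq_card => U; rewrite !inE.
    case WU: (W <= U)%VS; last by rewrite !andbF.
    by rewrite (subv_trans LW WU) andbT.
  rewrite D; apply: eq_bigr => U /andP [LU /eqP dU].
  have := @hyper _ _ L U LU; rewrite dL dU => Hc.
  apply/eqP; rewrite -(eqn_pmul2r q32) -aux3 // -Hc.
  apply/eqP; congr (_ * _)%N; apply: eq_card => W; rewrite !inE.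
  by case: (L <= W)%VS; case: (W <= U)%VS; case: (\dim W == 3%N).
have E9 : (#|[set U : {vspace vT} | [&& (L <= U)%VS, \dim U == 4%N & scattered G U]]| + #|NS| = #|T|)%N.
  rewrite -(cardID (scattered G) T); congr (_ + _)%N; apply: eq_card => U; rewrite !inE.
    by rewrite andbA.
  by rewrite [RHS]andbC.
have E5 : (\sum_(S | G S) #|[pred U | T U && (S <= U)%VS]| = #|G0| + #|G1| * h)%N.
  rewrite (eq_bigr (fun S => if (S :&: L == 0)%VS then 1%N else h)); last by move=> S GS; rewrite cS.
  rewrite (bigID (fun S => (S :&: L == 0)%VS)) /=.
  rewrite (eq_bigr (fun _ => 1%N)); last by move=> S /andP [_ ->].
  rewrite [X in (_ + X)%N](eq_bigr (fun _ => h)); last by move=> S /andP [_ /negbTE ->].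
  rewrite !sum_const_pred muln1; congr (_ + _ * _)%N; apply: eq_card => S; rewrite !inE //.
have dLS1 : \dim (L + S1)%VS = 3%N.
  have := dimv_sum_cap L S1; rewrite capvC dSL // dL (d2 S1 GS1).
  by move=> e; apply/eqP; rewrite -(eqn_add2r 1) e.
have E3 := hyp3' _ dLS1; rewrite hyp3 // in E3.
have E6 : (#|NS| + q ^ 2 = #|G0| + #|G1| * h)%N by rewrite -P3 P1 E5.
have hv4 : (4 <= v)%N by rewrite /v -[4%N]/(2 * 2)%N leq_mul2l hs orbT.
have le1 k : (1 <= q ^ k)%N by rewrite expn_gt0 qpos.
have lek a b : (a <= b)%N -> (q ^ a <= q ^ b)%N by move=> ab; rewrite leq_pexp2l.
pose r : rat := q%:R.
have castB a b : (a <= b)%N -> ((q ^ b - q ^ a)%:R : rat) = r ^+ b - r ^+ a.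
  by move=> ab; rewrite natrB ?lek // !natrX.
have cast1 b : ((q ^ b - 1)%:R : rat) = r ^+ b - 1.
  by rewrite natrB ?le1 // natrX.
have R1 : (#|G|%:R * (r ^+ 2 - 1) = r ^+ v - 1 :> rat).
  by rewrite -(cast1 2) -(cast1 v) -natrM E1.
have R3 : (h%:R * (r ^+ 4 - r ^+ 3) = r ^+ v - r ^+ 3 :> rat).
  by rewrite -(castB 3 4) // -(castB 3 v) ?(leq_trans _ hv4) // -natrM E3.
have R7 : (#|H3|%:R * (r ^+ 3 - r ^+ 2) = r ^+ v - r ^+ 2 :> rat).
  by rewrite -(castB 2 3) // -(castB 2 v) ?(leq_trans _ hv4) // -natrM E7.
have R8 : (#|H3|%:R * h%:R = #|T|%:R * (r + 1) :> rat).
  by rewrite -natrM E8 natrM -addn1 natrD.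
have R9 := congr1 (fun n => n%:R : rat) E9; rewrite /= natrD in R9.
have R6 := congr1 (fun n => n%:R : rat) E6; rewrite /= !natrD natrM natrX in R6.
have R4 := congr1 (fun n => n%:R : rat) E4; rewrite /= natrD in R4.
have R2 : (#|G1|%:R = r + 1 :> rat) by rewrite G1c -addn1 natrD.
have r2 : (2 <= r) by rewrite /r Num.Theory.ler_nat.
rewrite /gauss !big_ord_recr !big_ord0 /= !subn0 !natrX -/r.
have -> : (#|[set U : {vspace vT} | [&& (L <= U)%VS, \dim U == 4%N & scattered G U]]|%:R : rat)
   = #|T|%:R - #|NS|%:R by rewrite -R9 addrK.
have nzr1 : r + 1 != 0 by apply/eqP => e; move: r2; rewrite -[r](addrK 1) e; lra.
have nzm1 : r - 1 != 0 by apply/eqP => e; move: r2; rewrite -[r](subrK 1) e; lra.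
have nzr : r != 0 by apply/eqP => e; move: r2; rewrite e; lra.
have nz21 : r ^+ 2 - 1 != 0 by rewrite -cast1 Num.Theory.pnatr_eq0 -lt0n subn_gt0.
have nz43 : r ^+ 4 - r ^+ 3 != 0 by rewrite -castB // Num.Theory.pnatr_eq0 -lt0n.
have nz32 : r ^+ 3 - r ^+ 2 != 0 by rewrite -castB // Num.Theory.pnatr_eq0 -lt0n.
have hT : (#|T|%:R : rat) = #|H3|%:R * h%:R / (r + 1) by rewrite R8 mulfK.
have hNS : (#|NS|%:R : rat) = #|G0|%:R + #|G1|%:R * h%:R - r ^+ 2 by rewrite -R6 addrK.
have hG0 : (#|G0|%:R : rat) = #|G|%:R - #|G1|%:R by rewrite -R4 addrK.
have hGc : (#|G|%:R : rat) = (r ^+ v - 1) / (r ^+ 2 - 1) by rewrite -R1 mulfK.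
have hh : (h%:R : rat) = (r ^+ v - r ^+ 3) / (r ^+ 4 - r ^+ 3) by rewrite -R3 mulfK.
have hH3 : (#|H3|%:R : rat) = (r ^+ v - r ^+ 2) / (r ^+ 3 - r ^+ 2) by rewrite -R7 mulfK.
rewrite hT hNS hG0 hGc hh hH3 R2.
have ev : v = ((v - 4) + 4)%N by rewrite subnK.
move: (v - 4)%N ev => m ->.
case: (subaux m) => e1 e2 _; rewrite e2 e1.
rewrite !exprD (_ : (2 - 1)%N = 1%N) // !expr1.
move: (r ^+ m) => Q.
field.
by apply/and5P; split; [exact: nzm1 | exact: nz21 | exact: nz43 | exact: nzr1 | exact: nz32].
Qed.
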